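(* Let $M,M'\in\mathbb{C}^{2\times 2}$ be nonsingular matrices with $M'=M+\delta I$ for some nonzero $\delta\in\mathbb{C}$, where $M$ has distinct eigenvalues. If the two eigenvalues of $M$ have equal absolute value and the two eigenvalues of $M'$ have equal absolute value, then there exist $r,s\in\mathbb{R}$ such that $\mathrm{tr}(M)=r\delta$ and $\det(M)=s\delta^2$. *)

(* Defs.v *)
From HB Require Import structures.
From mathcomp Require Import all_boot all_order all_algebra.
From mathcomp Require Import reals.
From mathcomp.real_closed Require Export complex.
Set Implicit Arguments.
Unset Strict Implicit.
Unset Printing Implicit Defensive.
Import Order.TTheory GRing.Theory Num.Theory.
Local Open Scope ring_scope.

(* Main.v *)
Require Import Defs.
From HB Require Import structures.
From mathcomp Require Import all_boot all_order all_algebra.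
From mathcomp Require Import reals.
From mathcomp.real_closed Require Import complex.
Import Order.TTheory GRing.Theory Num.Theory.
Local Open Scope ring_scope.
From mathcomp Require Import ring.
Lemma ev2 (F: fieldType) (A : 'M[F]_2) a :
  eigenvalue A a -> a^+2 - \tr A * a + \det A = 0.
Proof.
rewrite eigenvalue_root_char => /rootP.
rewrite horner_coef size_char_poly !big_ord_recr big_ord0 /= add0r.
have := char_poly_trace A erefl; have := char_poly_det A; have /monicP := char_poly_monic A.
rewrite /lead_coef size_char_poly /= => h2 h0 h1.
rewrite h2 h0 h1 => <-. rewrite expr1 expr0. ring.
Qed.

Lemma ev_shift (F: fieldType) (A : 'M[F]_2) a d :
  eigenvalue A a -> eigenvalue (A + d%:M) (a + d).
Proof.
move=> /eigenvalueP [v hv v0]; apply/eigenvalueP; exists v => //.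
by rewrite mulmxDr hv mul_mx_scalar scalerDl.
Qed.

Lemma real_of (R : realType) (x : R[i]) : x^* = x -> exists r : R, x = r%:C%C.
Proof.
move=> h; exists (complex.Re x); rewrite RRe_real //.
by rewrite CrealE h.
Qed.
Lemma key (R : realType) (a b d : R[i]) : a != b -> b != 0 -> a != 0 -> d != 0 ->
  a * a^* = b * b^* -> (a + d) * (a + d)^* = (b + d) * (b + d)^* ->
  ((a + b) / d)^* = (a + b) / d /\ (a * b / d ^+ 2)^* = a * b / d ^+ 2.
Proof.
move=> ab b0 a0 d0 E1 E1'.
rewrite !(rmorphD, rmorphM, fmorphV, rmorphXn) /=.
rewrite !rmorphD /= in E1'.
set A := a^* in E1 E1' *; set B := b^* in E1 E1' *; set D := d^* in E1' *.
have A0 : A != 0 by rewrite conjC_eq0.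
have hB : B = a * A / b by rewrite E1 mulrAC divff ?mul1r.
have abN : a - b != 0 by rewrite subr_eq0.
have E2 : D * (a - b) = - d * (A - B).
  have h : D*(a-b) + d*(A-B) = (a + d) * (A + D) - (b + d) * (B + D) - (a*A - b*B) by ring.
  rewrite E1' E1 !subrr in h.
  by apply/eqP; rewrite mulNr -addr_eq0 h.
have hD : D = - d * (A - B) / (a - b) by rewrite -E2 mulfK.
have AB : A - B != 0.
  rewrite hB; apply/eqP=> h.
  have : A * (b - a) / b = 0 by rewrite -h; field.
  apply/eqP; rewrite !mulf_eq0 invr_eq0 (negPf A0) (negPf b0) /= orbF subr_eq0 eq_sym. exact: ab.
have hh : A * b - a * A != 0.
  by rewrite [A * b]mulrC -mulrBl mulf_neq0 // subr_eq0 eq_sym.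
rewrite hD hB.
by split; field; apply/and4P; split.
Qed.

Theorem corollary4p8 (R : realType) (M M' : 'M[R[i]]_2) (delta : R[i]) :
  M \in unitmx -> M' \in unitmx ->
  delta != 0 -> M' = M + delta%:M ->
  (exists a b : R[i], [/\ a != b, eigenvalue M a & eigenvalue M b]) ->
  (forall a b : R[i], eigenvalue M a -> eigenvalue M b -> `|a| = `|b|) ->
  (forall a b : R[i], eigenvalue M' a -> eigenvalue M' b -> `|a| = `|b|) ->
  exists r s : R, \tr M = (r%:C)%C * delta /\ \det M = (s%:C)%C * delta ^+ 2.
Proof.
move=> Mu _ d0 hM' [a [b [ab ea eb]]] hn hn'.
have ha := ev2 _ _ _ ea; have hb := ev2 _ _ _ eb.
have htr : \tr M = a + b.
  have h : (a - b) * (a + b - \tr M) = (a^+2 - \tr M * a + \det M) - (b^+2 - \tr M * b + \det M).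
    by ring.
  rewrite ha hb subrr in h.
  move/eqP: h; rewrite mulf_eq0 subr_eq0 (negPf ab) /= subr_eq0 => /eqP <-.
  done.
have hdet : \det M = a * b.
  have h : \det M = a * b + (a^+2 - \tr M * a + \det M) by rewrite htr; ring.
  by rewrite ha addr0 in h.
have det0 : \det M != 0 by rewrite -unitfE -unitmxE.
have a0 : a != 0 by apply: contraNneq det0 => a0; rewrite hdet a0 mul0r.
have b0 : b != 0 by apply: contraNneq det0 => b0; rewrite hdet b0 mulr0.
have E1 : a * a^* = b * b^*.
  by have := congr1 (fun x => x ^+ 2) (hn a b ea eb); rewrite /= !normCK.
have E1' : (a + delta) * (a + delta)^* = (b + delta) * (b + delta)^*.
  have ea' : eigenvalue M' (a + delta) by rewrite hM'; apply: ev_shift.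
  have eb' : eigenvalue M' (b + delta) by rewrite hM'; apply: ev_shift.
  by have := congr1 (fun x => x ^+ 2) (hn' _ _ ea' eb'); rewrite /= !normCK.
have [k1 k2] := key _ _ _ _ ab b0 a0 d0 E1 E1'.
have [r hr] := real_of _ _ k1; have [s hs] := real_of _ _ k2.
exists r, s; split.
  by rewrite -hr htr mulfVK.
by rewrite -hs hdet mulfVK // expf_neq0.
Qed.
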